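(* Let $f\in\mathcal S_{\mathbf M}$ and $n\in\mathbb N$, and let $\|\cdot\|$ denote either the Luxemburg norm $\|\cdot\|_{\mathbf M}$ or the Orlicz norm $\|\cdot\|^*_{\mathbf M}$. Then $$E_n(f):=\inf_{t_{n-1}\in\mathcal T_{n-1}}\|f-t_{n-1}\|=\|f-S_{n-1}(f)\|,$$ where $S_{n-1}(f)(x)=\sum_{|k|\le n-1}\widehat f(k)e^{\mathrm{i}kx}$ is the Fourier sum of $f$.
   Context: $L$ is the space of $2\pi$-periodic Lebesgue integrable functions, with Fourier coefficients $\widehat f(k)=(2\pi)^{-1}\int_0^{2\pi}f(x)e^{-\mathrm{i}kx}\,dx$, $k\in\mathbb Z$. Let $\mathbf M=\{M_k\}_{k\in\mathbb Z}$ be a sequence of Orlicz functions on $[0,\infty)$ (each $M_k$ nondecreasing and convex, $M_k(0)=0$, $M_k(u)\to\infty$ as $u\to\infty$). $\mathcal S_{\mathbf M}$ is the space of all $f\in L$ whose Luxemburg norm $\|f\|_{\mathbf M}=\inf\{a>0:\sum_{k\in\mathbb Z}M_k(|\widehat f(k)|/a)\le 1\}$ is finite (functions $f,g$ with $\|f-g\|_{\mathbf M}=0$ are identified). With $\tilde M_k(v)=\sup\{uv-M_k(u):u\ge0\}$, let $\Lambda$ be the set of sequences $\lambda=\{\lambda_k\}_{k\in\mathbb Z}$ of positive numbers with $\sum_k\tilde M_k(\lambda_k)\le1$; the Orlicz norm is $\|f\|^*_{\mathbf M}=\sup\{\sum_{k\in\mathbb Z}\lambda_k|\widehat f(k)|:\lambda\in\Lambda\}$.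 $\mathcal T_{m}$ denotes the set of trigonometric polynomials $\sum_{|k|\le m}c_ke^{\mathrm{i}kx}$ with arbitrary complex $c_k$. *)

(* Defs.v *)
From mathcomp Require Import all_boot all_order all_algebra.
From mathcomp Require Import all_classical all_reals all_analysis.
From mathcomp Require Import complex.
Import Order.TTheory GRing.Theory Num.Theory.

Set Implicit Arguments.
Unset Strict Implicit.
Unset Printing Implicit Defensive.

Local Open Scope classical_set_scope.
Local Open Scope ring_scope.

Section OrliczSeq.
Variable R : realType.

Definition cmod (z : R[i]) : R := Num.sqrt (complex.Re z ^+ 2 + complex.Im z ^+ 2).

Definition expi (t : R) : R[i] := Complex (cos t) (sin t).

Definition inL (f : R -> R[i]) : Prop :=
  (forall x, f (x + 2 * pi) = f x) /\
  (@lebesgue_measure R).-integrable `[0, 2 * pi] (EFin \o (fun x => complex.Re (f x))) /\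
  (@lebesgue_measure R).-integrable `[0, 2 * pi] (EFin \o (fun x => complex.Im (f x))).

Definition fourier (f : R -> R[i]) (k : int) : R[i] :=
  Complex
    ((2 * pi)^-1 * Rintegral (@lebesgue_measure R) `[0, 2 * pi]
        (fun x => complex.Re (f x * expi (- (k%:~R * x)))))
    ((2 * pi)^-1 * Rintegral (@lebesgue_measure R) `[0, 2 * pi]
        (fun x => complex.Im (f x * expi (- (k%:~R * x))))).

(* trigonometric polynomial sum_{|k| <= m} c_k e^{ikx} *)
Definition trigpoly (m : nat) (c : int -> R[i]) (x : R) : R[i] :=
  \sum_(i < (2 * m).+1) c (i%:Z - m%:Z) * expi ((i%:Z - m%:Z)%:~R * x).

Definition Tpoly (m : nat) : set (R -> R[i]) :=
  [set t | exists c : int -> R[i], t = trigpoly m c].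

Definition fsum (m : nat) (f : R -> R[i]) : R -> R[i] := trigpoly m (fourier f).

Definition orlicz_fun (M : R -> R) : Prop :=
  [/\ M 0 = 0,
      (forall u v, 0 <= u -> u <= v -> M u <= M v),
      (forall u v t, 0 <= u -> 0 <= v -> 0 <= t -> t <= 1 ->
          M (t * u + (1 - t) * v) <= t * M u + (1 - t) * M v)
    & M x @[x --> +oo] --> +oo].

(* Luxemburg norm (extended-real valued; +oo iff f is not in S_M) *)
Definition lux_norm (M : int -> R -> R) (f : R -> R[i]) : \bar R :=
  ereal_inf [set a%:E | a in
    [set a : R | 0 < a /\
       (\esum_(k in [set: int]) (M k (cmod (fourier f k) / a))%:E <= 1)%E]].

Definition compl_fun (M : R -> R) (v : R) : \bar R :=
  ereal_sup [set (u * v - M u)%:E | u in [set u : R | 0 <= u]].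

Definition Lambda (M : int -> R -> R) : set (int -> R) :=
  [set lam | (forall k, 0 < lam k) /\
     (\esum_(k in [set: int]) compl_fun (M k) (lam k) <= 1)%E].

Definition orl_norm (M : int -> R -> R) (f : R -> R[i]) : \bar R :=
  ereal_sup [set (\esum_(k in [set: int]) (lam k * cmod (fourier f k))%:E)%E
            | lam in Lambda M].

End OrliczSeq.

(* Main.v *)
Require Import Defs.
From mathcomp Require Import all_boot all_order all_algebra.
From mathcomp Require Import all_classical all_reals all_analysis.
From mathcomp Require Import complex.
Import Order.TTheory GRing.Theory Num.Theory.
Import numFieldNormedType.Exports.
From mathcomp Require Import zify ring lra.
From mathcomp Require Import measurable_realfun.
Local Open Scope classical_set_scope.
Local Open Scope ring_scope.

Section S.
Variable R : realType.
Notation mu := (@lebesgue_measure R).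

Lemma sin_int2pi (p : int) : sin (p%:~R * (2 * pi)) = 0 :> R.
Proof.
have H n : sin (n%:R * (2 * pi)) = 0 :> R.
  rewrite (_ : n%:R * (2 * pi) = 0 + pi *+ 2 *+ n); last by rewrite add0r -mulrnA -(mulr_natl pi (2 * n)) natrM; ring.
  rewrite (@periodicn _ _ sin) ?sin0 //; exact: sinD2pi.
case: p => n; first by rewrite /= H.
by rewrite NegzE mulrNz mulNr sinN -[(n.+1)%:~R]/((n.+1)%:R) H oppr0.
Qed.

Lemma cos_int2pi (p : int) : cos (p%:~R * (2 * pi)) = 1 :> R.
Proof.
have H n : cos (n%:R * (2 * pi)) = 1 :> R.
  rewrite (_ : n%:R * (2 * pi) = 0 + pi *+ 2 *+ n); last by rewrite add0r -mulrnA -(mulr_natl pi (2 * n)) natrM; ring.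
  rewrite (@periodicn _ _ cos) ?cos0 //; exact: cosD2pi.
case: p => n; first by rewrite /= H.
by rewrite NegzE mulrNz mulNr cosN -[(n.+1)%:~R]/((n.+1)%:R) H.
Qed.

Lemma dlin (a x : R) : is_derive x 1 (fun y : R => a * y) a.
Proof.
have := @is_deriveZ R R R id a x 1 1 (is_derive_id x 1).
move=> _; apply: is_derive_eq; exact: mulr1.
Qed.

Lemma dsinM (a x : R) : derivable (fun y => sin (a * y)) x 1 /\
   derive1 (fun y => sin (a * y)) x = cos (a * x) * a.
Proof.
have d1 : derivable (fun y : R => a * y) x 1 by have := dlin a x; case.
have d2 : derivable (@sin R) (a * x) 1 by exact: ex_derive.
split.
  change (derivable (sin \o ( *%R a)) x 1); apply/derivable1_diffP.
  apply: differentiable_comp; exact/derivable1_diffP.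
have := derive1_comp d1 d2.
rewrite /comp => ->.
rewrite !derive1E.
rewrite (@derive_val _ _ _ _ _ _ _ (is_derive_sin (a * x))).
by rewrite (@derive_val _ _ _ _ _ _ _ (dlin a x)).
Qed.

Lemma dcosM (a x : R) : derivable (fun y => cos (a * y)) x 1 /\
   derive1 (fun y => cos (a * y)) x = - sin (a * x) * a.
Proof.
have d1 : derivable (fun y : R => a * y) x 1 by have := dlin a x; case.
have d2 : derivable (@cos R) (a * x) 1 by exact: ex_derive.
split.
  change (derivable (cos \o ( *%R a)) x 1); apply/derivable1_diffP.
  apply: differentiable_comp; exact/derivable1_diffP.
have := derive1_comp d1 d2.
rewrite /comp => ->.
rewrite !derive1E.
rewrite (@derive_val _ _ _ _ _ _ _ (is_derive_cos (a * x))).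
by rewrite (@derive_val _ _ _ _ _ _ _ (dlin a x)).
Qed.

Lemma cont_cosM (a : R) : forall x : R, continuous_at x (fun y => cos (a * y)).
Proof.
move=> x; apply: continuous_comp; last exact: continuous_cos.
exact: mulrl_continuous.
Qed.

Lemma cont_sinM (a : R) : forall x : R, continuous_at x (fun y => sin (a * y)).
Proof.
move=> x; apply: continuous_comp; last exact: continuous_sin.
exact: mulrl_continuous.
Qed.


Lemma cM (s t : R -> R) x : continuous_at x s -> continuous_at x t ->
  continuous_at x (fun y => s y * t y).
Proof. by move=> hs ht; exact: (@continuousM _ _ s t x hs ht). Qed.
Lemma cB (s t : R -> R) x : continuous_at x s -> continuous_at x t ->
  continuous_at x (fun y => s y - t y).
Proof. by move=> hs ht; exact: (@continuousB _ _ _ s t x hs ht). Qed.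
Lemma cD (s t : R -> R) x : continuous_at x s -> continuous_at x t ->
  continuous_at x (fun y => s y + t y).
Proof. by move=> hs ht; exact: (@continuousD _ _ _ s t x hs ht). Qed.
Lemma cN (s : R -> R) x : continuous_at x s -> continuous_at x (fun y => - s y).
Proof. by move=> hs; exact: (@continuousN _ _ _ s x hs). Qed.
Lemma cC (r x : R) : continuous_at x (fun _ : R => r).
Proof. exact: cst_continuous. Qed.

Lemma twopi_gt0 : 0 < 2 * pi :> R.
Proof. by rewrite mulr_gt0 ?pi_gt0. Qed.

Lemma Rint_ftc (f F : R -> R) :
  (forall x, continuous_at x f) ->
  (forall x, derivable F x 1) -> (forall x, continuous_at x F) ->
  (forall x, derive1 F x = f x) ->
  Rintegral mu `[0, 2 * pi] f = F (2 * pi) - F 0.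
Proof.
move=> cf dF cF F'f.
rewrite /Rintegral (@continuous_FTC2 _ _ F) ?twopi_gt0 //.
- exact/continuous_subspaceT.
- split.
  + by move=> x _; exact: dF.
  + by apply: cvg_at_right_filter; exact: cF.
  + by apply: cvg_at_left_filter; exact: cF.
Qed.

Lemma int_cos (p : int) :
  Rintegral mu `[0, 2 * pi] (fun x => cos (p%:~R * x)) = if p == 0 then 2 * pi else 0.
Proof.
have [->|p0] := eqVneq p 0.
  rewrite (@eq_Rintegral _ _ _ _ _ (fun=> 1)); last by move=> x _; rewrite mul0r cos0.
  rewrite Rintegral_cst // mul1r /= lebesgue_measure_itv /= lte_fin twopi_gt0 /=.
  by rewrite subr0.
have a0 : p%:~R != 0 :> R by rewrite intr_eq0.
rewrite (@Rint_ftc _ (fun y => sin (p%:~R * y) * (p%:~R)^-1)).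
- by rewrite sin_int2pi mulr0 sin0 !mul0r subr0.
- exact: cont_cosM.
- move=> x; apply: derivableM; first exact: (dsinM _ x).1.
  exact: derivable_cst.
- move=> x; apply: cM; [exact: cont_sinM | exact: cC].
- move=> x; rewrite derive1Mr; last exact: (dsinM _ x).1.
  by rewrite (dsinM _ x).2 -mulrA mulfV // mulr1.
Qed.

Lemma int_sin (p : int) :
  Rintegral mu `[0, 2 * pi] (fun x => sin (p%:~R * x)) = 0.
Proof.
have [->|p0] := eqVneq p 0.
  rewrite (@eq_Rintegral _ _ _ _ _ (fun=> 0)); last by move=> x _; rewrite mul0r sin0.
  by rewrite Rintegral_cst // mul0r.
have a0 : p%:~R != 0 :> R by rewrite intr_eq0.
rewrite (@Rint_ftc _ (fun y => - cos (p%:~R * y) * (p%:~R)^-1)).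
- by rewrite cos_int2pi mulr0 cos0 subrr.
- exact: cont_sinM.
- move=> x; apply: derivableM; last exact: derivable_cst.
  apply: derivableN; exact: (dcosM _ x).1.
- move=> x; apply: cM; [apply: cN; exact: cont_cosM | exact: cC].
- move=> x; rewrite derive1Mr; last by apply: derivableN; exact: (dcosM _ x).1.
  rewrite derive1E deriveN; last exact: (dcosM _ x).1.
  by rewrite -derive1E (dcosM _ x).2 !mulNr opprK -mulrA mulfV // mulr1.
Qed.

End S.

Section S2.
Variable R : realType.
Notation mu := (@lebesgue_measure R).
Local Notation Re := complex.Re.
Local Notation Im := complex.Im.
Local Notation D := (`[0, 2 * pi]%classic : set R).

Lemma ReM (x y : R[i]) : Re (x * y) = Re x * Re y - Im x * Im y.
Proof. by case: x => a b; case: y => c d. Qed.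
Lemma ImM (x y : R[i]) : Im (x * y) = Re x * Im y + Im x * Re y.
Proof. by case: x => a b; case: y => c d. Qed.
Lemma ReB (x y : R[i]) : Re (x - y) = Re x - Re y.
Proof. by case: x => a b; case: y => c d. Qed.
Lemma ImB (x y : R[i]) : Im (x - y) = Im x - Im y.
Proof. by case: x => a b; case: y => c d. Qed.
Lemma ReD (x y : R[i]) : Re (x + y) = Re x + Re y.
Proof. by case: x => a b; case: y => c d. Qed.
Lemma ImD (x y : R[i]) : Im (x + y) = Im x + Im y.
Proof. by case: x => a b; case: y => c d. Qed.

Lemma expiD a b : expi a * expi b = expi (a + b) :> R[i].
Proof.
rewrite /expi; apply/eqP; rewrite eq_complex /= cosD sinD.
by apply/andP; split; apply/eqP; ring.
Qed.

Definition Int (g : R -> R[i]) :=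
  mu.-integrable D (EFin \o (fun x => Re (g x))) /\
  mu.-integrable D (EFin \o (fun x => Im (g x))).

Lemma mD : measurable D. Proof. exact: measurable_itv. Qed.

Lemma Int_cont (g : R -> R) : (forall x, continuous_at x g) ->
  mu.-integrable D (EFin \o g).
Proof.
move=> cg; apply: continuous_compact_integrable; first exact: segment_compact.
exact/continuous_subspaceT.
Qed.

Lemma Int_cexpi (c : R[i]) (a : R) : Int (fun x => c * expi (a * x)).
Proof.
split; apply: Int_cont => x.
  have -> : (fun x => Re (c * expi (a * x))) = (fun x => Re c * cos (a * x) - Im c * sin (a * x))
    by apply/funext => y; rewrite ReM.
  by apply: cB; apply: cM; (try exact: cC); [exact: cont_cosM | exact: cont_sinM].
have -> : (fun x => Im (c * expi (a * x))) = (fun x => Re c * sin (a * x) + Im c * cos (a * x))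
  by apply/funext => y; rewrite ImM.
by apply: cD; apply: cM; (try exact: cC); [exact: cont_sinM | exact: cont_cosM].
Qed.

Lemma bnd_cosM a : [bounded cos (a * x) | x in D].
Proof.
exists 1; split; first by rewrite num_real.
move=> M M1 x _ /=; rewrite (le_trans _ (ltW M1))//.
by rewrite ler_norml cos_geN1 cos_le1.
Qed.

Lemma bnd_sinM a : [bounded sin (a * x) | x in D].
Proof.
exists 1; split; first by rewrite num_real.
move=> M M1 x _ /=; rewrite (le_trans _ (ltW M1))//.
by rewrite ler_norml sin_geN1 sin_le1.
Qed.

Lemma IntM_bnd (u h : R -> R) : mu.-integrable D (EFin \o u) ->
  (forall x, continuous_at x h) -> [bounded h x | x in D] ->
  mu.-integrable D (EFin \o (fun x => u x * h x)).
Proof.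
move=> iu ch bh.
rewrite (_ : EFin \o _ = ((EFin \o u) \* (EFin \o h))%E); last by apply/funext.
exact: (integrableMl _ iu (measurable_funTS (continuous_measurable_fun ch)) bh).
Qed.

Lemma Int_mul_expi (g : R -> R[i]) (a : R) : Int g -> Int (fun x => g x * expi (a * x)).
Proof.
move=> [ir ii]; split.
  rewrite (_ : _ \o _ = ((EFin \o (fun x => (Re (g x) * cos (a * x))%R)) \-
      (EFin \o (fun x => (Im (g x) * sin (a * x))%R)))%E); last by apply/funext => x /=; rewrite ReM.
  apply: integrableB; first exact: measurable_itv.
    apply: IntM_bnd => //; [exact: cont_cosM| exact: bnd_cosM].
  apply: IntM_bnd => //; [exact: cont_sinM| exact: bnd_sinM].
rewrite (_ : _ \o _ = ((EFin \o (fun x => (Re (g x) * sin (a * x))%R)) \+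
    (EFin \o (fun x => (Im (g x) * cos (a * x))%R)))%E); last by apply/funext => x /=; rewrite ImM.
apply: integrableD; first exact: measurable_itv.
  apply: IntM_bnd => //; [exact: cont_sinM| exact: bnd_sinM].
apply: IntM_bnd => //; [exact: cont_cosM| exact: bnd_cosM].
Qed.

Definition CI (g : R -> R[i]) : R[i] :=
  Complex (Rintegral mu D (fun x => Re (g x))) (Rintegral mu D (fun x => Im (g x))).

Lemma Int_sub g h : Int g -> Int h -> Int (fun x => g x - h x).
Proof.
move=> [gr gi] [hr hi]; split.
  rewrite (_ : _ \o _ = ((EFin \o (fun x => Re (g x))) \- (EFin \o (fun x => Re (h x))))%E);
    last by apply/funext => x /=; rewrite ReB.
  by apply: integrableB; first exact: measurable_itv.
rewrite (_ : _ \o _ = ((EFin \o (fun x => Im (g x))) \- (EFin \o (fun x => Im (h x))))%E);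
  last by apply/funext => x /=; rewrite ImB.
by apply: integrableB; first exact: measurable_itv.
Qed.

Lemma Int_add g h : Int g -> Int h -> Int (fun x => g x + h x).
Proof.
move=> [gr gi] [hr hi]; split.
  rewrite (_ : _ \o _ = ((EFin \o (fun x => Re (g x))) \+ (EFin \o (fun x => Re (h x))))%E);
    last by apply/funext => x /=; rewrite ReD.
  by apply: integrableD; first exact: measurable_itv.
rewrite (_ : _ \o _ = ((EFin \o (fun x => Im (g x))) \+ (EFin \o (fun x => Im (h x))))%E);
  last by apply/funext => x /=; rewrite ImD.
by apply: integrableD; first exact: measurable_itv.
Qed.

Lemma CI_sub g h : Int g -> Int h -> CI (fun x => g x - h x) = CI g - CI h.
Proof.
move=> [gr gi] [hr hi]; rewrite /CI.
transitivity (Complex (Rintegral mu D (fun x => Re (g x)) - Rintegral mu D (fun x => Re (h x)))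
   (Rintegral mu D (fun x => Im (g x)) - Rintegral mu D (fun x => Im (h x)))); last by [].
congr Complex.
  rewrite -RintegralB; [|exact: measurable_itv|exact: gr|exact: hr].
  by apply: eq_Rintegral => x _; rewrite ReB.
rewrite -RintegralB; [|exact: measurable_itv|exact: gi|exact: hi].
by apply: eq_Rintegral => x _; rewrite ImB.
Qed.

Lemma CI_add g h : Int g -> Int h -> CI (fun x => g x + h x) = CI g + CI h.
Proof.
move=> [gr gi] [hr hi]; rewrite /CI.
transitivity (Complex (Rintegral mu D (fun x => Re (g x)) + Rintegral mu D (fun x => Re (h x)))
   (Rintegral mu D (fun x => Im (g x)) + Rintegral mu D (fun x => Im (h x)))); last by [].
congr Complex.
  rewrite -RintegralD; [|exact: measurable_itv|exact: gr|exact: hr].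
  by apply: eq_Rintegral => x _; rewrite ReD.
rewrite -RintegralD; [|exact: measurable_itv|exact: gi|exact: hi].
by apply: eq_Rintegral => x _; rewrite ImD.
Qed.

Lemma Int0 : Int (fun=> 0).
Proof.
by split; apply: Int_cont => x; exact: cst_continuous.
Qed.

Lemma CI0 : CI (fun=> 0) = 0.
Proof.
rewrite /CI /=.
have -> : Rintegral mu D (fun=> (0 : R)) = 0 by rewrite Rintegral_cst // mul0r.
by [].
Qed.

Lemma Int_sum N (F : 'I_N -> R -> R[i]) : (forall i, Int (F i)) ->
  Int (fun x => \sum_(i < N) F i x) /\
  CI (fun x => \sum_(i < N) F i x) = \sum_(i < N) CI (F i).
Proof.
move=> iF; elim: N F iF => [|N IH] F iF.
  under eq_fun do rewrite big_ord0.
  by rewrite big_ord0; split; [exact: Int0 | exact: CI0].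
have [i1 c1] := IH (fun i => F (widen_ord (leqnSn N) i)) (fun i => iF _).
under eq_fun do rewrite big_ord_recr /=.
rewrite big_ord_recr /=; split; first exact: Int_add.
by rewrite CI_add // c1.
Qed.

Lemma icos r a : mu.-integrable D (EFin \o (fun x => r * cos (a * x))).
Proof.
apply: Int_cont => x; apply: continuousM; [exact: cst_continuous|exact: cont_cosM].
Qed.
Lemma isin r a : mu.-integrable D (EFin \o (fun x => r * sin (a * x))).
Proof.
apply: Int_cont => x; apply: continuousM; [exact: cst_continuous|exact: cont_sinM].
Qed.
Lemma icos1 a : mu.-integrable D (EFin \o (fun x => cos (a * x))).
Proof. by apply: Int_cont => x; exact: cont_cosM. Qed.
Lemma isin1 a : mu.-integrable D (EFin \o (fun x => sin (a * x))).
Proof. by apply: Int_cont => x; exact: cont_sinM. Qed.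

Lemma CI_cexpi (c : R[i]) (p : int) :
  CI (fun x => c * expi (p%:~R * x)) = if p == 0 then ((2 * pi)%:C)%C * c else 0.
Proof.
rewrite /CI.
under eq_Rintegral do rewrite ReM /=.
under [X in Complex _ X]eq_Rintegral do rewrite ImM /=.
rewrite RintegralB; [|exact: measurable_itv|exact: icos|exact: isin].
rewrite RintegralD; [|exact: measurable_itv|exact: isin|exact: icos].
rewrite !RintegralZl; try (exact: measurable_itv); try (exact: icos1); try (exact: isin1).
rewrite int_cos int_sin.
case: (p == 0); apply/eqP; rewrite eq_complex /=; case: c => a b /=;
  apply/andP; split; apply/eqP; ring.
Qed.

Definition fc (z : R[i]) : R[i] := Complex ((2 * pi)^-1 * Re z) ((2 * pi)^-1 * Im z).

Lemma fourierE g k : fourier g k = fc (CI (fun x => g x * expi (- (k%:~R * x)))).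
Proof. by []. Qed.

Lemma fcB z w : fc (z - w) = fc z - fc w.
Proof.
rewrite /fc; case: z => a b; case: w => c d /=; apply/eqP; rewrite eq_complex /=.
by apply/andP; split; apply/eqP; ring.
Qed.

Lemma Int_mul_expiN g a : Int g -> Int (fun x => g x * expi (- (a * x))).
Proof.
move=> ig; under eq_fun do rewrite -mulNr.
exact: Int_mul_expi.
Qed.

Lemma fourier_sub f t k : Int f -> Int t ->
  fourier (fun x => f x - t x) k = fourier f k - fourier t k.
Proof.
move=> i1 i2; rewrite !fourierE -fcB -CI_sub; try exact: Int_mul_expiN.
by congr (fc (CI _)); apply/funext => x; rewrite mulrBl.
Qed.

Lemma Int_trig (m : nat) (c : int -> R[i]) : Int (trigpoly m c).
Proof.
exact: (@Int_sum (2 * m).+1 (fun i x => c (i%:Z - m%:Z) * expi ((i%:Z - m%:Z)%:~R * x))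
  (fun i => Int_cexpi _ _)).1.
Qed.

Lemma fourier_trig (m : nat) (c : int -> R[i]) (k : int) :
  fourier (trigpoly m c) k = if (- (m%:Z) <= k <= m%:Z) then c k else 0.
Proof.
rewrite fourierE.
have -> : (fun x => trigpoly m c x * expi (- (k%:~R * x))) =
   (fun x => \sum_(i < (2 * m).+1) c (i%:Z - m%:Z) * expi ((i%:Z - m%:Z - k)%:~R * x)).
  apply/funext => x; rewrite /trigpoly big_distrl /=; apply: eq_bigr => i _.
  by rewrite -mulrA expiD [(_ - k)%:~R]rmorphB mulrBl.
have [_ ->] := @Int_sum (2 * m).+1 (fun i x => c (i%:Z - m%:Z) * expi ((i%:Z - m%:Z - k)%:~R * x))
  (fun i => Int_cexpi _ _).
under eq_bigr do rewrite CI_cexpi.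
case: ifP => hk.
  have hk' : (absz (k + m%:Z)%R < (2 * m).+1)%N by lia.
  pose i0 : 'I_(2 * m).+1 := Ordinal hk'.
  rewrite (bigD1 i0) //= big1.
    have -> : (absz (k + m%:Z))%:Z - m%:Z - k == 0 by apply/eqP; lia.
    have -> : (absz (k + m%:Z))%:Z - m%:Z = k by lia.
    rewrite addr0 /fc; case: (c k) => a b; apply/eqP; rewrite eq_complex /=.
    have pi0 : 2 * pi != 0 :> R by rewrite gt_eqF // twopi_gt0.
    by apply/andP; split; apply/eqP; rewrite mul0r ?subr0 ?addr0 mulrA mulVf // mul1r.
  move=> i /eqP ni; case: ifP => // /eqP h; exfalso; apply: ni.
  by apply: val_inj => /=; lia.
rewrite big1; first by rewrite /fc; apply/eqP; rewrite eq_complex /= !mulr0 !eqxx.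
move=> i _; case: ifP => // /eqP h; exfalso.
have := ltn_ord i; move: hk; lia.
Qed.

Lemma cmod0 : cmod (0 : R[i]) = 0.
Proof. by rewrite /cmod /= expr0n /= addr0 sqrtr0. Qed.

Lemma cmod_ge0 (z : R[i]) : 0 <= cmod z.
Proof. exact: sqrtr_ge0. Qed.

Lemma lux_mono (M : int -> R -> R) g h : (forall k, orlicz_fun (M k)) ->
  (forall k, cmod (fourier g k) <= cmod (fourier h k)) ->
  (lux_norm M g <= lux_norm M h)%E.
Proof.
move=> HM gh; rewrite /lux_norm; apply: ereal_inf_le_tmp.
move=> _ [a [a0 ha] <-]; exists a => //; split => //.
apply: le_trans ha; apply: le_esum => k _; rewrite lee_fin.
have [_ mon _ _] := HM k; apply: mon.
  by rewrite divr_ge0 ?cmod_ge0 ?ltW.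
by rewrite ler_pM2r ?invr_gt0.
Qed.

Lemma orl_mono (M : int -> R -> R) g h :
  (forall k, cmod (fourier g k) <= cmod (fourier h k)) ->
  (orl_norm M g <= orl_norm M h)%E.
Proof.
move=> gh; rewrite /orl_norm; apply: ge_ereal_sup.
move=> _ [lam hl <-]; apply: le_ereal_sup_tmp.
exists (\esum_(k in [set: int]) (lam k * cmod (fourier h k))%:E)%E; first by exists lam.
apply: le_esum => k _; rewrite lee_fin.
by rewrite ler_wpM2l // ltW //; case: hl => + _; apply.
Qed.
End S2.

Theorem lemma2 (R : realType) (M : int -> R -> R)
  (HM : forall k, orlicz_fun (M k))
  (f : R -> R[i]) (hfL : inL f) (hfS : (lux_norm M f < +oo)%E)
  (n : nat) (hn : (0 < n)%N) :
  ereal_inf [set lux_norm M (fun x => f x - t x) | t in @Tpoly R n.-1]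
    = lux_norm M (fun x => f x - fsum n.-1 f x)
  /\
  ereal_inf [set orl_norm M (fun x => f x - t x) | t in @Tpoly R n.-1]
    = orl_norm M (fun x => f x - fsum n.-1 f x).
Proof.
have iF : @Int R f by case: hfL => _ [].
have key t : @Tpoly R n.-1 t -> forall k,
    cmod (fourier (fun x => f x - fsum n.-1 f x) k) <= cmod (fourier (fun x => f x - t x) k).
  move=> [c ->] k; rewrite /fsum !fourier_sub //; try exact: Int_trig.
  rewrite !fourier_trig; case: ifP => _ //.
  by rewrite subrr cmod0 cmod_ge0.
have memS : @Tpoly R n.-1 (fsum n.-1 f) by exists (fourier f).
split; apply/eqP; rewrite eq_le; apply/andP; split.
- by apply: ge_ereal_inf; exists (lux_norm M (fun x => f x - fsum n.-1 f x)) => //; exists (fsum n.-1 f).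
- by apply: le_ereal_inf_tmp => _ [t Ht <-]; apply: lux_mono => //; exact: key.
- by apply: ge_ereal_inf; exists (orl_norm M (fun x => f x - fsum n.-1 f x)) => //; exists (fsum n.-1 f).
- by apply: le_ereal_inf_tmp => _ [t Ht <-]; apply: orl_mono; exact: key.
Qed.
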